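(* Let $\mathbb{X},\mathbb{Y}$ be real Banach spaces such that $\operatorname{Sm}\mathbb{X}$ is dense in $\mathbb{X}$. If a non-zero bounded linear operator $T:\mathbb{X}\to\mathbb{Y}$ preserves Birkhoff–James orthogonality at each $x\in\operatorname{Sm}\mathbb{X}$, then $T$ is injective.
   Context: $u\perp_B v$ means $\|u+\lambda v\|\ge\|u\|$ for all real $\lambda$. $T$ preserves Birkhoff–James orthogonality at $x$ if $x\perp_B v$ implies $Tx\perp_B Tv$ for all $v\in\mathbb{X}$. For non-zero $z$, $J(z)=\{f\in\mathbb{X}^*:\|f\|=1,\ f(z)=\|z\|\}$; $z$ is smooth if $J(z)$ is a singleton; $\operatorname{Sm}\mathbb{X}$ is the set of smooth points. *)

(* Defs.v *)
From HB Require Import structures.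
From mathcomp Require Import all_boot all_order all_algebra.
From mathcomp Require Import all_classical all_reals all_analysis.
Set Implicit Arguments. Unset Strict Implicit. Unset Printing Implicit Defensive.
Import Order.TTheory GRing.Theory Num.Theory.
Import numFieldNormedType.Exports.
Local Open Scope classical_set_scope.
Local Open Scope ring_scope.

Definition bj_orth (R : realType) (X : normedModType R) (u v : X) : Prop :=
  forall lambda : R, `|u| <= `|u + lambda *: v|.

Definition preserves_bj_at (R : realType) (X Y : normedModType R)
  (T : X -> Y) (x : X) : Prop :=
  forall v : X, bj_orth x v -> bj_orth (T x) (T v).

Definition dual_elt (R : realType) (X : normedModType R) (f : X -> R) : Prop :=
  linear f /\ continuous f.

Definition dual_norm_eq1 (R : realType) (X : normedModType R) (f : X -> R) : Prop :=
  (forall x : X, `|f x| <= `|x|) /\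
  (forall r : R, r < 1 -> exists x : X, r * `|x| < `|f x|).

Definition Jset (R : realType) (X : normedModType R) (z : X) : set (X -> R) :=
  [set f | dual_elt f /\ dual_norm_eq1 f /\ f z = `|z|].

Definition smooth_point (R : realType) (X : normedModType R) (z : X) : Prop :=
  z != 0 /\ exists f, Jset z = [set f].

Definition Sm (R : realType) (X : normedModType R) : set X :=
  [set z | smooth_point z].

(* Main.v *)
Require Import Defs.
From HB Require Import structures.
From mathcomp Require Import all_boot all_order all_algebra.
From mathcomp Require Import all_classical all_reals all_analysis.
From mathcomp Require Import lra.
Import Order.TTheory GRing.Theory Num.Theory.
Import numFieldNormedType.Exports.
Local Open Scope classical_set_scope.
Local Open Scope ring_scope.
Lemma subgrad (R : realType) (X : normedModType R) (x z : X) :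
  exists g : R, forall mu, `|x| + g * mu <= `|x + mu *: z|.
Proof.
set N := `|x|; set phi := fun mu : R => `|x + mu *: z|.
have conv : forall mu nu : R, mu < 0 -> 0 < nu ->
    (nu - mu) * N <= nu * phi mu - mu * phi nu.
  move=> mu nu hm hn.
  have -> : (nu - mu) * N = `|(nu - mu) *: x|.
    by rewrite normrZ ger0_norm // subr_ge0; apply: ltW; apply: lt_trans hn.
  have -> : (nu - mu) *: x = nu *: (x + mu *: z) - mu *: (x + nu *: z).
    rewrite !scalerDr !scalerA mulrC scalerBl opprD addrACA subrr addr0.
    by [].
  apply: le_trans (ler_normB _ _) _.
  rewrite !normrZ (gtr0_norm hn) (ltr0_norm hm) /phi; lra.
have key : forall mu nu : R, mu < 0 -> 0 < nu ->
    (phi mu - N) / mu <= (phi nu - N) / nu.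
  move=> mu nu hm hn; rewrite ler_ndivrMr // mulrAC ler_pdivrMr //.
  have := conv _ _ hm hn; nra.
set S := [set t | exists2 mu : R, mu < 0 & t = (phi mu - N) / mu].
have S0 : S !=set0 by exists ((phi (-1) - N) / (-1)); exists (-1) => //; rewrite ltrN10.
have Sub : has_ubound S.
  exists ((phi 1 - N) / 1) => t [mu hm ->]; exact: key.
exists (sup S) => mu.
case: (ltgtP mu 0) => hm.
- have hs : (phi mu - N) / mu <= sup S by apply: ub_le_sup => //; exists mu.
  have : sup S * mu <= (phi mu - N) / mu * mu by rewrite ler_wnM2r // ltW.
  rewrite divfK ?lt_eqF //; rewrite /phi; lra.
- have hs : sup S <= (phi mu - N) / mu.
    by apply: ge_sup => // t [nu hn ->]; exact: key.
  move: hs; rewrite ler_pdivlMr // /phi; lra.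
- by rewrite hm scale0r addr0 mulr0 addr0.
Qed.

Lemma supp_ineq (R : realType) (X : normedModType R) (x z : X) (g : R) :
  (forall mu, `|x| + g * mu <= `|x + mu *: z|) ->
  forall s l : R, s * `|x| + g * l <= `|s *: x + l *: z|.
Proof.
move=> hg s l.
have hb : g * l <= `|l| * `|z|.
  have := hg l; have := ler_normD x (l *: z); rewrite normrZ; lra.
case: (ltrP 0 s) => hs.
- have e : s *: x + l *: z = s *: (x + (l / s) *: z).
    by rewrite scalerDr scalerA [s * _]mulrC divfK ?gt_eqF.
  rewrite e normrZ gtr0_norm //.
  have -> : s * `|x| + g * l = s * (`|x| + g * (l / s)).
    by rewrite mulrDr mulrCA [s * (l / s)]mulrC divfK ?gt_eqF.
  by rewrite ler_pM2l // hg.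
- have := lerB_normD (l *: z) (s *: x).
  rewrite [l *: z + _]addrC !normrZ (ler0_norm hs).
  have : 0 <= `|x| by [].
  nra.
Qed.

Theorem mainTheorem4 (R : realType) (X Y : completeNormedModType R)
  (T : {linear X -> Y}) :
  dense (@Sm R X) ->
  continuous T ->
  (exists x : X, T x != 0) ->
  (forall x : X, @Sm R X x -> preserves_bj_at T x) ->
  injective T.
Proof.
move=> hd hc [w hw] hp a b hab.
apply/eqP; rewrite -subr_eq0; apply/negPn/negP => hz.
set z := a - b in hz.
have Tz : T z = 0 by rewrite /z linearB hab subrr.
have nz : 0 < `|z| by rewrite normr_gt0.
have nw : 0 < `|w|.
  rewrite normr_gt0; apply: contra hw => /eqP ->; by rewrite linear0.
set O := ball z (`|z| / 2) `&` ((fun y => `|T y|) @^-1` [set r : R | 0 < r]).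
have oO : open O.
  apply: openI; first exact: ball_open.
  apply: open_comp; last exact: open_gt.
  move=> y _; apply: continuous_comp; first exact: hc.
  exact: norm_continuous.
have neO : O !=set0.
  set d := `|z| / (4 * `|w|).
  have dp : 0 < d by rewrite divr_gt0 // mulr_gt0.
  exists (z + d *: w); split.
  - rewrite -ball_normE /ball_ /= opprD addrA subrr add0r normrN normrZ gtr0_norm //.
    have -> : d * `|w| = `|z| / 4.
      by rewrite /d invfM !mulrA mulfVK ?gt_eqF.
    lra.
  - rewrite /= linearD linearZ Tz add0r normrZ gtr0_norm //.
    by rewrite mulr_gt0 // normr_gt0.
have [x [[hxb hTx] hsm]] := hd O neO oO.
move: hxb; rewrite -ball_normE /ball_ /= => hxb.
have xn0 : x != 0 by case: hsm.
have N0 : 0 < `|x| by rewrite normr_gt0.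
have [g hg] := subgrad _ _ x z.
have g0 : g != 0.
  apply/eqP => g0; have := hg (-1); rewrite g0 mul0r addr0 scaleN1r.
  have := ler_distD x z 0; rewrite !subr0.
  have := hxb; rewrite distrC; lra.
set c := - g / `|x|.
have cN : c * `|x| = - g by rewrite /c divfK ?gt_eqF.
have c0 : c != 0 by rewrite /c mulf_neq0 ?oppr_eq0 ?invr_eq0 // normr_eq0.
have horth : bj_orth x (c *: x + z).
  move=> l.
  have e : x + l *: (c *: x + z) = (1 + l * c) *: x + l *: z.
    by rewrite scalerDr scalerA scalerDl scale1r addrA.
  rewrite e; apply: le_trans (@supp_ineq _ _ _ _ _ hg _ _).
  rewrite mulrDl mul1r -mulrA cN; lra.
have := hp x hsm _ horth (- c^-1).
rewrite linearD linearZ Tz addr0 scalerA mulNr mulVf // scaleNr scale1r subrr normr0.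
move: hTx => /= hTx; lra.
Qed.
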